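(* Let $Q\in N_\kappa(H)$ have the representation $Q(z)=\Gamma_0^+(A-z)^{-1}\Gamma_0$, where $A$ is a bounded self-adjoint operator in a Pontryagin space $K$, $\Gamma_0:H\to K$ is bounded, and $\Gamma_0^+\Gamma_0$ is boundedly invertible (the representation need not be minimal). Let $P:=\Gamma_0(\Gamma_0^+\Gamma_0)^{-1}\Gamma_0^+$ and let $\tilde A:=(I-P)A(I-P)$, regarded as a bounded self-adjoint operator in the Pontryagin space $(I-P)K$; for $z\in\rho(\tilde A)$ let $(I-P)(\tilde A-z)^{-1}(I-P)$ denote the operator on $K$ equal to $(\tilde A-z)^{-1}$ on $(I-P)K$ and to $0$ on $PK$. Then for every $z\in\rho(A)\cap\rho(\tilde A)$, $Q(z)$ is boundedly invertible and $\hat Q(z):=-Q(z)^{-1}$ is given by $$\hat Q(z)=(\Gamma_0^+\Gamma_0)^{-1}\Gamma_0^+\Big\{A(I-P)(\tilde A-z)^{-1}(I-P)A-(A-z)\Big\}\Gamma_0(\Gamma_0^+\Gamma_0)^{-1}.$$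
   Context: $H$ is a Hilbert space with inner product $(\cdot,\cdot)$; $(K,[\cdot,\cdot])$ is a Pontryagin space (Krein space with finitely many negative squares). For bounded $\Gamma_0:H\to K$, $\Gamma_0^+:K\to H$ is defined by $(h,\Gamma_0^+k)=[\Gamma_0h,k]$. $N_\kappa(H)$ is the class of generalized Nevanlinna functions: $Q$ meromorphic in $\mathbb{C}\setminus\mathbb{R}$ with values in bounded operators on $H$, $Q(\bar z)^*=Q(z)$, and the kernel $\frac{Q(z)-Q(w)^*}{z-\bar w}$ has exactly $\kappa$ negative squares. $P$ is an orthogonal projection in $K$ with $PK=\Gamma_0(H)$, $(I-P)K=\ker\Gamma_0^+$, and $K=(I-P)K[+]PK$. *)

(* Defs.v *)
From Stdlib Require Import Reals.
Open Scope R_scope.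

Set Implicit Arguments.

Record Cplx := mkC { Re : R; Im : R }.

Definition C0 : Cplx := mkC 0 0.
Definition C1 : Cplx := mkC 1 0.
Definition Cadd (a b : Cplx) : Cplx := mkC (Re a + Re b) (Im a + Im b).
Definition Copp (a : Cplx) : Cplx := mkC (- Re a) (- Im a).
Definition Cmul (a b : Cplx) : Cplx :=
  mkC (Re a * Re b - Im a * Im b) (Re a * Im b + Im a * Re b).
Definition Cconj (a : Cplx) : Cplx := mkC (Re a) (- Im a).
Definition Cinv (a : Cplx) : Cplx :=
  let d := Re a * Re a + Im a * Im a in mkC (Re a / d) (- Im a / d).
Definition Cdiv (a b : Cplx) : Cplx := Cmul a (Cinv b).

Fixpoint Csum (n : nat) (f : nat -> Cplx) : Cplx :=
  match n with
  | O => C0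
  | S k => Cadd (Csum k f) (f k)
  end.

Record CVS := {
  V :> Type;
  vadd : V -> V -> V;
  vzero : V;
  vopp : V -> V;
  vscal : Cplx -> V -> V;
  vadd_assoc : forall x y z, vadd x (vadd y z) = vadd (vadd x y) z;
  vadd_comm : forall x y, vadd x y = vadd y x;
  vadd_0 : forall x, vadd x vzero = x;
  vadd_opp : forall x, vadd x (vopp x) = vzero;
  vscal_1 : forall x, vscal C1 x = x;
  vscal_assoc : forall a b x, vscal a (vscal b x) = vscal (Cmul a b) x;
  vscal_distr_v : forall a x y, vscal a (vadd x y) = vadd (vscal a x) (vscal a y);
  vscal_distr_c : forall a b x, vscal (Cadd a b) x = vadd (vscal a x) (vscal b x)
}.
Arguments vadd {c}. Arguments vzero {c}. Arguments vopp {c}. Arguments vscal {c}.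

Definition vsub {X : CVS} (x y : X) : X := vadd x (vopp y).

Fixpoint vsum {X : CVS} (n : nat) (x : nat -> X) : X :=
  match n with
  | O => vzero
  | S k => vadd (vsum k x) (x k)
  end.

Definition linear {X Y : CVS} (T : X -> Y) : Prop :=
  (forall x y, T (vadd x y) = vadd (T x) (T y)) /\
  (forall a x, T (vscal a x) = vscal a (T x)).

Definition bounded {X Y : CVS} (nX : X -> R) (nY : Y -> R) (T : X -> Y) : Prop :=
  linear T /\ exists M : R, forall x, nY (T x) <= M * nX x.

Definition complete_wrt {X : CVS} (n : X -> R) : Prop :=
  forall u : nat -> X,
    (forall eps, 0 < eps -> exists N, forall p q, (N <= p)%nat -> (N <= q)%nat ->
        n (vsub (u p) (u q)) < eps) ->
    exists l : X, forall eps, 0 < eps -> exists N, forall p, (N <= p)%nat ->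
        n (vsub (u p) l) < eps.

Record Hilbert := {
  hsp :> CVS;
  ip : hsp -> hsp -> Cplx;
  ip_add_l : forall x y z, ip (vadd x y) z = Cadd (ip x z) (ip y z);
  ip_scal_l : forall a x y, ip (vscal a x) y = Cmul a (ip x y);
  ip_herm : forall x y, ip y x = Cconj (ip x y);
  ip_pos : forall x, 0 <= Re (ip x x);
  ip_def : forall x, ip x x = C0 -> x = vzero;
  hnorm_def := fun x => sqrt (Re (ip x x));
  h_complete : complete_wrt hnorm_def
}.
Arguments ip {h}.

Definition hnorm {H : Hilbert} (x : H) : R := sqrt (Re (ip x x)).

(* ---------- Pontryagin spaces ----------
   A Krein space (K,[.,.]) given with a fundamental symmetry J: J is linear,
   J^2 = I, J is [.,.]-selfadjoint, (x,y)_J := [Jx,y] is a complete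
   (Hilbert) inner product; K_- = {x | Jx = -x} is finite dimensional. *)
Record Pontryagin := {
  ksp :> CVS;
  kip : ksp -> ksp -> Cplx;
  kip_add_l : forall x y z, kip (vadd x y) z = Cadd (kip x z) (kip y z);
  kip_scal_l : forall a x y, kip (vscal a x) y = Cmul a (kip x y);
  kip_herm : forall x y, kip y x = Cconj (kip x y);
  fJ : ksp -> ksp;
  fJ_linear : linear fJ;
  fJ_invol : forall x, fJ (fJ x) = x;
  fJ_sa : forall x y, kip (fJ x) y = kip x (fJ y);
  fJ_pos : forall x, 0 <= Re (kip (fJ x) x);
  fJ_def : forall x, kip (fJ x) x = C0 -> x = vzero;
  knorm_def := fun x => sqrt (Re (kip (fJ x) x));
  k_complete : complete_wrt knorm_def;
  k_neg_findim : exists (n : nat) (b : nat -> ksp),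
      forall x, fJ x = vopp x -> exists c : nat -> Cplx, x = vsum n (fun i => vscal (c i) (b i))
}.
Arguments kip {p}. Arguments fJ {p}.

Definition knorm {K : Pontryagin} (x : K) : R := sqrt (Re (kip (fJ x) x)).

Definition is_resolvent (K : Pontryagin) (A : K -> K) (z : Cplx) (RA : K -> K) : Prop :=
  bounded knorm knorm RA /\
  forall x, RA (vsub (A x) (vscal z x)) = x /\ vsub (A (RA x)) (vscal z (RA x)) = x.

Definition projP {H : Hilbert} {K : Pontryagin} (G0 : H -> K) (Ginv : H -> H)
  (G0p : K -> H) (x : K) : K := G0 (Ginv (G0p x)).

Definition Atilde {K : Pontryagin} (P : K -> K) (A : K -> K) (x : K) : K :=
  vsub (A (vsub x (P x))) (P (A (vsub x (P x)))).

(* z in rho(Atilde) (Atilde regarded in (I-P)K) and R is the operator on K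
   equal to (Atilde - z)^{-1} on (I-P)K and to 0 on PK. *)
Definition is_compressed_resolvent (K : Pontryagin) (P A : K -> K) (z : Cplx)
  (Rt : K -> K) : Prop :=
  bounded knorm knorm Rt /\
  (forall x, Rt (P x) = vzero) /\
  (forall x, P (Rt x) = vzero) /\
  forall x, P x = vzero ->
    Rt (vsub (Atilde P A x) (vscal z x)) = x /\
    vsub (Atilde P A (Rt x)) (vscal z (Rt x)) = x.

(* Hermitian form  sum_{i,j<m} c_i conj(c_j) (N(z_i,z_j) h_i, h_j),
   N(z,w) = (Q z - (Q w)^* )/(z - conj w). *)
Definition kernel_form {H : Hilbert} (Q : Cplx -> H -> H) (m : nat)
  (zs : nat -> Cplx) (hs : nat -> H) (c : nat -> Cplx) : Cplx :=
  Csum m (fun i => Csum m (fun j =>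
    Cmul (Cmul (c i) (Cconj (c j)))
      (Cdiv (Cadd (ip (Q (zs i) (hs i)) (hs j)) (Copp (ip (hs i) (Q (zs j) (hs j)))))
            (Cadd (zs i) (Copp (Cconj (zs j))))))).

Definition neg_squares_ge {H : Hilbert} (D : Cplx -> Prop) (Q : Cplx -> H -> H) (n : nat) : Prop :=
  exists (m : nat) (zs : nat -> Cplx) (hs : nat -> H) (v : nat -> nat -> Cplx),
    (forall i, (i < m)%nat -> D (zs i)) /\
    (forall i j, (i < m)%nat -> (j < m)%nat -> zs i <> Cconj (zs j)) /\
    forall a : nat -> Cplx, (exists k, (k < n)%nat /\ a k <> C0) ->
      Re (kernel_form Q m zs hs (fun i => Csum n (fun k => Cmul (a k) (v k i)))) < 0.

(* Q in N_kappa(H), considered on its domain D (nonreal points of holomorphy) *)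
Definition nevanlinna_class {H : Hilbert} (D : Cplx -> Prop) (kappa : nat) (Q : Cplx -> H -> H) : Prop :=
  (forall z, D z -> D (Cconj z)) /\
  (forall z, D z -> bounded hnorm hnorm (Q z)) /\
  (forall z, D z -> forall h g, ip (Q z h) g = ip h (Q (Cconj z) g)) /\
  neg_squares_ge D Q kappa /\ ~ neg_squares_ge D Q (S kappa).

Definition nonreal (z : Cplx) : Prop := Im z <> 0.

(* Main.v *)
From Stdlib Require Import Reals Lra Psatz.
Require Import Defs.
Open Scope R_scope.

Ltac Cext := repeat match goal with c : Cplx |- _ => destruct c end;
  unfold Cadd, Cmul, Cconj, Copp, Defs.C0, Defs.C1 in *; simpl in *; f_equal; ring.

Section Vec.
Context {X : CVS}.
Implicit Types x y z : X.

Lemma add0l x : vadd vzero x = x.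
Proof. rewrite vadd_comm; apply vadd_0. Qed.
Lemma addoppl x : vadd (vopp x) x = vzero.
Proof. rewrite vadd_comm; apply vadd_opp. Qed.
Lemma add_cancel a x y : vadd a x = vadd a y -> x = y.
Proof. intro E. rewrite <- (add0l x), <- (add0l y), <- (addoppl a), <- !vadd_assoc, E; reflexivity. Qed.
Lemma opp_unique x y : vadd x y = vzero -> y = vopp x.
Proof. intro E. apply (add_cancel x). rewrite E, vadd_opp; reflexivity. Qed.
Lemma opp_opp x : vopp (vopp x) = x.
Proof. symmetry. apply opp_unique. apply addoppl. Qed.
Lemma opp_add x y : vopp (vadd x y) = vadd (vopp x) (vopp y).
Proof. symmetry; apply opp_unique.
  rewrite <- vadd_assoc, (vadd_assoc _ y (vopp x) (vopp y)), (vadd_comm _ y (vopp x)), <- (vadd_assoc _ (vopp x)), vadd_opp, vadd_0, vadd_opp. reflexivity. Qed.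
Lemma opp0 : vopp (@vzero X) = vzero.
Proof. symmetry; apply opp_unique; apply vadd_0. Qed.
Lemma scal0 x : vscal Defs.C0 x = vzero.
Proof. apply (add_cancel (vscal Defs.C0 x)). rewrite vadd_0, <- vscal_distr_c.
  f_equal. Cext. Qed.
Lemma scal_zero a : vscal a (@vzero X) = vzero.
Proof. apply (add_cancel (vscal a vzero)). rewrite vadd_0, <- vscal_distr_v, vadd_0. reflexivity. Qed.
Lemma opp_scal x : vopp x = vscal (mkC (-1) 0) x.
Proof. symmetry; apply opp_unique. rewrite <- (vscal_1 _ x) at 1.
  rewrite <- vscal_distr_c. replace (Cadd Defs.C1 (mkC (-1) 0)) with Defs.C0 by Cext. apply scal0. Qed.
Lemma sub_eq x y : vsub x y = vzero -> x = y.
Proof. unfold vsub; intro E. rewrite <- (opp_opp y). apply opp_unique; rewrite vadd_comm; auto. Qed.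
Lemma sub0 x : vsub x vzero = x.
Proof. unfold vsub; rewrite opp0; apply vadd_0. Qed.
Lemma subxx x : vsub x x = vzero.
Proof. apply vadd_opp. Qed.
Lemma subK x y : vadd (vsub x y) y = x.
Proof. unfold vsub; rewrite <- vadd_assoc, addoppl, vadd_0; reflexivity. Qed.
Lemma scal_opp a x : vscal a (vopp x) = vopp (vscal a x).
Proof. rewrite !opp_scal, !vscal_assoc. f_equal. Cext. Qed.
End Vec.

Section Lin.
Context {X Y Z : CVS}.
Lemma lin0 (T : X -> Y) : linear T -> T vzero = vzero.
Proof. intros [Ha Hs]. rewrite <- (scal0 vzero), Hs, scal0. reflexivity. Qed.
Lemma lin_opp (T : X -> Y) (x : X) : linear T -> T (vopp x) = vopp (T x).
Proof. intros [Ha Hs]. rewrite !opp_scal, Hs; reflexivity. Qed.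
Lemma lin_sub (T : X -> Y) (x y : X) : linear T -> T (vsub x y) = vsub (T x) (T y).
Proof. intros L. unfold vsub. rewrite (proj1 L), lin_opp; auto. Qed.
Lemma lin_comp (S : Y -> Z) (T : X -> Y) : linear S -> linear T -> linear (fun x => S (T x)).
Proof. intros [a b] [c d]; split; intros; rewrite ?c, ?d, ?a, ?b; reflexivity. Qed.
Lemma lin_oppf (T : X -> Y) : linear T -> linear (fun x => vopp (T x)).
Proof. intros [a b]; split; intros; rewrite ?a, ?b. apply opp_add. rewrite scal_opp; auto. Qed.
Lemma lin_addf (S T : X -> Y) : linear S -> linear T -> linear (fun x => vadd (S x) (T x)).
Proof. intros [a b] [c d]; split; intros.
 - rewrite a, c, !vadd_assoc. f_equal. rewrite <- !vadd_assoc. f_equal. apply vadd_comm.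
 - rewrite b, d, vscal_distr_v. reflexivity. Qed.
Lemma lin_subf (S T : X -> Y) : linear S -> linear T -> linear (fun x => vsub (S x) (T x)).
Proof. intros; unfold vsub; apply lin_addf; auto. apply lin_oppf; auto. Qed.
Lemma lin_id : linear (fun x : X => x).
Proof. split; reflexivity. Qed.
Lemma lin_scalf (a : Cplx) : linear (fun x : X => vscal a x).
Proof. split; intros. apply vscal_distr_v. rewrite !vscal_assoc. f_equal. Cext. Qed.
End Lin.

Section Form.
Context {X : CVS} (F : X -> X -> Cplx).
Hypothesis Fadd : forall x y z, F (vadd x y) z = Cadd (F x z) (F y z).
Hypothesis Fscal : forall a x y, F (vscal a x) y = Cmul a (F x y).
Hypothesis Fherm : forall x y, F y x = Cconj (F x y).
Hypothesis Fpos : forall x, 0 <= Re (F x x).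

Definition nrm (x : X) := sqrt (Re (F x x)).

Lemma F_add_r x y z : F x (vadd y z) = Cadd (F x y) (F x z).
Proof. rewrite (Fherm (vadd y z) x), (Fherm y x), (Fherm z x), Fadd. Cext. Qed.
Lemma F_scal_r a x y : F x (vscal a y) = Cmul (Cconj a) (F x y).
Proof. rewrite (Fherm (vscal a y) x), (Fherm y x), Fscal. Cext. Qed.
Lemma F_Re_sym x y : Re (F y x) = Re (F x y).
Proof. rewrite Fherm. reflexivity. Qed.
Lemma F_Im_diag x : Im (F x x) = 0.
Proof. pose proof (f_equal Im (Fherm x x)). simpl in H. lra. Qed.

Lemma F_quad x y t : Re (F (vadd x (vscal (mkC t 0) y)) (vadd x (vscal (mkC t 0) y)))
  = Re (F x x) + 2 * t * Re (F x y) + t * t * Re (F y y).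
Proof.
  rewrite Fadd, !F_add_r, !Fscal, !F_scal_r. pose proof (F_Re_sym x y). pose proof (F_Im_diag y).
  destruct (F x y), (F y x), (F y y), (F x x); simpl in *. subst. nra. Qed.

Lemma CS x y : Re (F x y) * Re (F x y) <= Re (F x x) * Re (F y y).
Proof.
  pose proof (Fpos x); pose proof (Fpos y).
  set (a := Re (F y y)) in *; set (b := Re (F x y)) in *; set (c := Re (F x x)) in *.
  assert (Hq : forall t, 0 <= c + 2 * t * b + t * t * a).
  { intro t. unfold a, b, c. rewrite <- F_quad. apply Fpos. }
  destruct (Req_dec a 0) as [Ha|Ha].
  - destruct (Req_dec b 0) as [Hb|Hb]. { rewrite Hb; nra. }
    specialize (Hq (- (c + 1) / (2 * b))). rewrite Ha in Hq.
    replace (c + 2 * (- (c + 1) / (2 * b)) * b + - (c + 1) / (2 * b) * (- (c + 1) / (2 * b)) * 0)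
      with (-1) in Hq by (field; auto). lra.
  - specialize (Hq (- b / a)).
    replace (c + 2 * (- b / a) * b + - b / a * (- b / a) * a) with ((c * a - b * b) / a) in Hq
      by (field; auto).
    assert (0 < a) by lra.
    assert (0 <= c * a - b * b).
    { apply Rmult_le_reg_r with (/ a). apply Rinv_0_lt_compat; lra.
      rewrite Rmult_0_l. exact Hq. }
    nra.
Qed.

Lemma nrm_pos x : 0 <= nrm x.
Proof. apply sqrt_pos. Qed.
Lemma nrm_sq x : nrm x * nrm x = Re (F x x).
Proof. apply sqrt_sqrt, Fpos. Qed.

Lemma CS_le x y : Re (F x y) <= nrm x * nrm y.
Proof.
  pose proof (CS x y). pose proof (nrm_sq x); pose proof (nrm_sq y).
  pose proof (nrm_pos x); pose proof (nrm_pos y).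
  assert (Re (F x y) * Re (F x y) <= (nrm x * nrm y) * (nrm x * nrm y)) by nra.
  assert (0 <= nrm x * nrm y) by nra.
  destruct (Rle_dec (Re (F x y)) (nrm x * nrm y)) as [|n]; auto.
  exfalso. assert (nrm x * nrm y < Re (F x y)) by lra. nra.
Qed.

Lemma nrm_le_sq x c : 0 <= c -> Re (F x x) <= c * c -> nrm x <= c.
Proof. intros Hc H. unfold nrm. rewrite <- (sqrt_square c Hc). apply sqrt_le_1_alt. auto. Qed.

Lemma nrm_tri x y : nrm (vadd x y) <= nrm x + nrm y.
Proof.
  apply nrm_le_sq. pose proof (nrm_pos x); pose proof (nrm_pos y); lra.
  pose proof (F_quad x y 1). replace (mkC 1 0) with Defs.C1 in H by reflexivity.
  rewrite vscal_1 in H. rewrite H.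
  pose proof (CS_le x y); pose proof (nrm_sq x); pose proof (nrm_sq y). nra.
Qed.

Lemma nrm_scal a x : nrm (vscal a x) = sqrt (Re a * Re a + Im a * Im a) * nrm x.
Proof.
  unfold nrm. rewrite <- sqrt_mult. f_equal.
  rewrite Fscal, F_scal_r. pose proof (F_Im_diag x). destruct (F x x), a; simpl in *. subst. ring.
  nra. apply Fpos.
Qed.

Lemma nrm_opp x : nrm (vopp x) = nrm x.
Proof. rewrite opp_scal, nrm_scal. simpl. replace (-1 * -1 + 0 * 0) with 1 by ring.
  rewrite sqrt_1; ring. Qed.

Lemma nrm_sub x y : nrm (vsub x y) <= nrm x + nrm y.
Proof. unfold vsub. rewrite <- (nrm_opp y). apply nrm_tri. Qed.

Lemma nrm_def x : Re (F x x) = 0 -> F x x = Defs.C0.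
Proof. intro H. pose proof (F_Im_diag x). destruct (F x x); simpl in *; subst; reflexivity. Qed.
End Form.

Section KH.
Context (H : Hilbert) (K : Pontryagin).
Definition FK (x y : K) := kip (fJ x) y.
Lemma FK_add x y z : FK (vadd x y) z = Cadd (FK x z) (FK y z).
Proof. unfold FK. rewrite (proj1 (fJ_linear K)). apply kip_add_l. Qed.
Lemma FK_scal a x y : FK (vscal a x) y = Cmul a (FK x y).
Proof. unfold FK. rewrite (proj2 (fJ_linear K)). apply kip_scal_l. Qed.
Lemma FK_herm x y : FK y x = Cconj (FK x y).
Proof. unfold FK. rewrite fJ_sa, kip_herm. reflexivity. Qed.
Lemma FK_pos x : 0 <= Re (FK x x).
Proof. apply fJ_pos. Qed.

Lemma knorm_nrm (x : K) : knorm x = nrm FK x.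
Proof. reflexivity. Qed.
Lemma hnorm_nrm (x : H) : hnorm x = nrm ip x.
Proof. reflexivity. Qed.

Lemma knorm_pos (x : K) : 0 <= knorm x. Proof. apply sqrt_pos. Qed.
Lemma hnorm_pos (x : H) : 0 <= hnorm x. Proof. apply sqrt_pos. Qed.
Lemma knorm_tri (x y : K) : knorm (vadd x y) <= knorm x + knorm y.
Proof. exact (nrm_tri FK FK_add FK_scal FK_herm FK_pos x y). Qed.
Lemma knorm_sub (x y : K) : knorm (vsub x y) <= knorm x + knorm y.
Proof. exact (nrm_sub FK FK_add FK_scal FK_herm FK_pos x y). Qed.
Lemma knorm_scal a (x : K) : knorm (vscal a x) = sqrt (Re a * Re a + Im a * Im a) * knorm x.
Proof. exact (nrm_scal FK FK_scal FK_herm FK_pos a x). Qed.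
Lemma hnorm_opp (x : H) : hnorm (vopp x) = hnorm x.
Proof. exact (nrm_opp ip (ip_scal_l H) (ip_herm H) (ip_pos H) x). Qed.

Lemma knorm_J (x : K) : knorm (fJ x) = knorm x.
Proof. unfold knorm. f_equal. rewrite fJ_invol, kip_herm. reflexivity. Qed.

Lemma kip_le (x y : K) : Re (kip x y) <= knorm x * knorm y.
Proof. rewrite <- (fJ_invol K x) at 1. rewrite <- (knorm_J x).
  exact (CS_le FK FK_add FK_scal FK_herm FK_pos (fJ x) y). Qed.

Lemma ip_eq0 (x : H) : (forall h : H, ip h x = Defs.C0) -> x = vzero.
Proof. intro E. apply ip_def. apply E. Qed.

Lemma ip_add_r (x y z : H) : ip x (vadd y z) = Cadd (ip x y) (ip x z).
Proof. exact (F_add_r ip (ip_add_l H) (ip_herm H) x y z). Qed.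
Lemma ip_scal_r a (x y : H) : ip x (vscal a y) = Cmul (Cconj a) (ip x y).
Proof. exact (F_scal_r ip (ip_scal_l H) (ip_herm H) a x y). Qed.
Lemma kip_add_r (x y z : K) : kip x (vadd y z) = Cadd (kip x y) (kip x z).
Proof. exact (F_add_r kip (kip_add_l K) (kip_herm K) x y z). Qed.
Lemma kip_scal_r a (x y : K) : kip x (vscal a y) = Cmul (Cconj a) (kip x y).
Proof. exact (F_scal_r kip (kip_scal_l K) (kip_herm K) a x y). Qed.

Lemma adj_linear (G0 : H -> K) (G0p : K -> H) :
  (forall h k, ip h (G0p k) = kip (G0 h) k) -> linear G0p.
Proof.
  intro Hadj. split.
  - intros x y. apply sub_eq, ip_eq0. intro h. unfold vsub.
    rewrite ip_add_r, opp_scal, ip_scal_r, ip_add_r, !Hadj, kip_add_r. Cext.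
  - intros a x. apply sub_eq, ip_eq0. intro h. unfold vsub.
    rewrite ip_add_r, opp_scal, ip_scal_r, ip_scal_r, !Hadj, kip_scal_r. Cext.
Qed.

Lemma adj_bound (G0 : H -> K) (G0p : K -> H) M :
  (forall h k, ip h (G0p k) = kip (G0 h) k) -> 0 <= M ->
  (forall h, knorm (G0 h) <= M * hnorm h) ->
  forall k, hnorm (G0p k) <= M * knorm k.
Proof.
  intros Hadj HM HB k.
  assert (E : hnorm (G0p k) * hnorm (G0p k) = Re (kip (G0 (G0p k)) k)).
  { rewrite <- Hadj. unfold hnorm. apply sqrt_sqrt, ip_pos. }
  pose proof (kip_le (G0 (G0p k)) k). pose proof (HB (G0p k)).
  pose proof (hnorm_pos (G0p k)); pose proof (knorm_pos k); pose proof (knorm_pos (G0 (G0p k))).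
  assert (hnorm (G0p k) * hnorm (G0p k) <= M * hnorm (G0p k) * knorm k) by nra.
  destruct (Req_dec (hnorm (G0p k)) 0) as [Z|Z]. rewrite Z; nra.
  assert (0 < hnorm (G0p k)) by lra. nra.
Qed.
End KH.

Lemma bnd_pos {X Y : CVS} (nX : X -> R) (nY : Y -> R) T : (forall x, 0 <= nX x) ->
  bounded nX nY T -> exists M, 0 <= M /\ forall x, nY (T x) <= M * nX x.
Proof. intros P [_ [M HM]]. exists (Rmax M 0). split. apply Rmax_r.
  intro x. eapply Rle_trans. apply HM. apply Rmult_le_compat_r; auto; apply Rmax_l. Qed.

Theorem theorem2 (H : Hilbert) (K : Pontryagin) (kappa : nat) (Q : Cplx -> H -> H)
  (A : K -> K) (G0 : H -> K) (G0p : K -> H) (Ginv : H -> H) :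
  bounded hnorm knorm G0 ->
  (forall (h : H) (k : K), ip h (G0p k) = kip (G0 h) k) ->
  bounded knorm knorm A ->
  (forall x y : K, kip (A x) y = kip x (A y)) ->
  bounded hnorm hnorm Ginv ->
  (forall h : H, Ginv (G0p (G0 h)) = h) ->
  (forall h : H, G0p (G0 (Ginv h)) = h) ->
  (forall z RA, is_resolvent K A z RA -> forall h : H, Q z h = G0p (RA (G0 h))) ->
  nevanlinna_class (fun z => nonreal z /\ exists RA, is_resolvent K A z RA) kappa Q ->
  forall (z : Cplx) (RA Rt : K -> K),
    is_resolvent K A z RA ->
    is_compressed_resolvent K (projP G0 Ginv G0p) A z Rt ->
    exists Qi : H -> H,
      bounded hnorm hnorm Qi /\
      (forall h, Qi (Q z h) = h) /\
      (forall h, Q z (Qi h) = h) /\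
      (forall h, vopp (Qi h) =
         Ginv (G0p (vsub (A (Rt (A (G0 (Ginv h)))))
                         (vsub (A (G0 (Ginv h))) (vscal z (G0 (Ginv h))))))).
Proof.
  intros BG0 Hadj BA _ BGi hG1 hG2 HQ _ z RA Rt Hres Hcr.
  pose proof (proj1 BG0) as LG0. pose proof (proj1 BA) as LA. pose proof (proj1 BGi) as LGi.
  pose proof (adj_linear H K G0 G0p Hadj) as LG0p.
  destruct Hres as [BRA Hres]. pose proof (proj1 BRA) as LRA.
  destruct Hcr as [BRt [RtP [PRt HRt]]]. pose proof (proj1 BRt) as LRt.
  set (P := projP G0 Ginv G0p) in *.
  assert (LP : linear P) by (unfold P, projP; apply lin_comp; [auto| apply lin_comp; auto]).
  assert (PP : forall x, P (P x) = P x) by (intro; unfold P, projP; rewrite hG2; reflexivity).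
  assert (G0pP : forall x, G0p (P x) = G0p x) by (intro; unfold P, projP; rewrite hG2; reflexivity).
  assert (PG0 : forall h, P (G0 h) = G0 h) by (intro; unfold P, projP; rewrite hG1; reflexivity).
  set (M := fun x => vsub (A x) (vscal z x)).
  assert (LM : linear M) by (apply lin_subf; auto; apply lin_scalf).
  set (GG := fun x => Ginv (G0p x)).
  assert (LGG : linear GG) by (exact (lin_comp Ginv G0p LGi LG0p)).
  set (E := fun k => vsub (A (Rt (A k))) (vsub (A k) (vscal z k))).
  exists (fun h => vopp (Ginv (G0p (E (G0 (Ginv h)))))).
  split; [|split; [|split]].
  - assert (LE : linear E).
    { unfold E. apply lin_subf; [|exact LM]. apply lin_comp; auto. apply lin_comp; auto. }
    split.
    + apply lin_oppf. apply lin_comp; auto. apply lin_comp; auto. apply lin_comp; auto.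
      apply lin_comp; auto.
    + destruct (bnd_pos _ _ _ (knorm_pos K) BA) as [MA [MA0 HA]].
      destruct (bnd_pos _ _ _ (knorm_pos K) BRt) as [MR [MR0 HR]].
      destruct (bnd_pos _ _ _ (hnorm_pos H) BG0) as [MG [MG0 HG]].
      destruct (bnd_pos _ _ _ (hnorm_pos H) BGi) as [MI [MI0 HI]].
      pose proof (adj_bound H K G0 G0p MG Hadj MG0 HG) as HGp.
      set (c := sqrt (Re z * Re z + Im z * Im z)).
      assert (c0 : 0 <= c) by apply sqrt_pos.
      assert (HE : forall k, knorm (E k) <= (MA * MR * MA + MA + c) * knorm k).
      { intro k. unfold E. eapply Rle_trans. apply knorm_sub.
        pose proof (knorm_sub K (A k) (vscal z k)). rewrite knorm_scal in H0. fold c in H0.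
        pose proof (HA (Rt (A k))). pose proof (HR (A k)). pose proof (HA k).
        pose proof (knorm_pos K k).
        assert (knorm (A (Rt (A k))) <= MA * MR * MA * knorm k).
        { eapply Rle_trans. exact H1. rewrite !Rmult_assoc. apply Rmult_le_compat_l; auto.
          eapply Rle_trans. exact H2. apply Rmult_le_compat_l; auto. }
        nra. }
      exists (MI * (MG * ((MA * MR * MA + MA + c) * (MG * MI)))).
      intro h. rewrite hnorm_opp.
      set (ME := MA * MR * MA + MA + c).
      assert (ME0 : 0 <= ME) by (unfold ME; nra).
      set (y := Ginv h).
      pose proof (HI h) as S1. fold y in S1.
      pose proof (HG y) as S2.
      pose proof (HE (G0 y)) as S3.
      pose proof (HGp (E (G0 y))) as S4.
      pose proof (HI (G0p (E (G0 y)))) as S5.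
      pose proof (hnorm_pos H h). pose proof (hnorm_pos H y). pose proof (knorm_pos K (G0 y)).
      pose proof (knorm_pos K (E (G0 y))). pose proof (hnorm_pos H (G0p (E (G0 y)))).
      assert (T1 : knorm (G0 y) <= MG * MI * hnorm h).
      { rewrite Rmult_assoc. eapply Rle_trans. exact S2. apply Rmult_le_compat_l; auto. }
      assert (T2 : knorm (E (G0 y)) <= ME * (MG * MI) * hnorm h).
      { rewrite Rmult_assoc. eapply Rle_trans. exact S3. apply Rmult_le_compat_l; auto. }
      assert (T3 : hnorm (G0p (E (G0 y))) <= MG * (ME * (MG * MI)) * hnorm h).
      { rewrite Rmult_assoc. eapply Rle_trans. exact S4. apply Rmult_le_compat_l; auto. }
      rewrite Rmult_assoc. eapply Rle_trans. exact S5. apply Rmult_le_compat_l; auto.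
  - intro h. rewrite (HQ z RA (conj BRA Hres)).
    set (k := RA (G0 h)).
    assert (Mk : M k = G0 h) by (apply (proj2 (Hres (G0 h)))).
    change (G0 (Ginv (G0p k))) with (P k).
    set (k1 := P k). set (k2 := vsub k k1).
    assert (Pk2 : P k2 = vzero) by (unfold k2, k1; rewrite lin_sub, PP, subxx; auto).
    assert (G0pk2 : G0p k2 = vzero) by (unfold k2, k1; rewrite lin_sub, G0pP, subxx; auto).
    assert (Hk2 : k2 = vopp (Rt (A k1))).
    { destruct (HRt k2 Pk2) as [E1 _]. rewrite <- E1. unfold Atilde. rewrite Pk2, sub0.
      rewrite !(lin_sub Rt) by auto. rewrite RtP, sub0, <- (lin_sub Rt) by auto.
      change (vsub (A k2) (vscal z k2)) with (M k2). unfold k2. rewrite (lin_sub M) by auto.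
      rewrite Mk, (lin_sub Rt) by auto. rewrite <- (PG0 h), RtP.
      unfold M. rewrite (lin_sub Rt), (proj2 LRt) by auto. unfold k1. rewrite RtP, scal_zero, sub0.
      unfold vsub. apply add0l. }
    assert (HR : Rt (A k1) = vopp k2) by (rewrite Hk2, opp_opp; auto).
    unfold E. rewrite HR, (lin_opp A) by auto.
    change (vsub (A k1) (vscal z k1)) with (M k1).
    change (Ginv (G0p ?w)) with (GG w). rewrite <- (lin_opp GG) by auto.
    assert (E2 : vopp (vsub (vopp (A k2)) (M k1)) = vadd (A k2) (M k1)).
    { unfold vsub. rewrite opp_add, !opp_opp. reflexivity. }
    rewrite E2. rewrite <- (subK (A k2) (vscal z k2)).
    change (vsub (A k2) (vscal z k2)) with (M k2).
    rewrite <- vadd_assoc, (vadd_comm _ (vscal z k2)), vadd_assoc, <- (proj1 LM).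
    unfold k2. rewrite subK, Mk. fold k2.
    rewrite (proj1 LGG), (proj2 LGG). unfold GG. rewrite hG1, G0pk2, (lin0 Ginv), scal_zero, vadd_0 by auto.
    reflexivity.
  - intro h. set (k1 := G0 (Ginv h)).
    assert (Pk1 : P k1 = k1) by (unfold k1, P, projP; rewrite hG2; reflexivity).
    set (w := Rt (A k1)).
    assert (Pw : P w = vzero) by apply PRt.
    assert (G0pw : G0p w = vzero) by (rewrite <- G0pP, Pw; apply lin0; auto).
    set (Pc := fun x => vsub x (P x)).
    assert (LPc : linear Pc) by (apply lin_subf; auto; apply lin_id).
    set (x0 := Pc (A k1)).
    assert (Px0 : P x0 = vzero) by (unfold x0, Pc; rewrite lin_sub, PP, subxx; auto).
    destruct (HRt x0 Px0) as [_ Hw].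
    assert (Rtx0 : Rt x0 = w) by (unfold x0, Pc; rewrite lin_sub, RtP, sub0; auto).
    rewrite Rtx0 in Hw. unfold Atilde in Hw. rewrite Pw, sub0 in Hw.
    set (u := vsub k1 w).
    assert (HPc : Pc (M u) = vzero).
    { unfold u. rewrite (lin_sub M), (lin_sub Pc) by auto.
      unfold M. rewrite !(lin_sub Pc) by auto. rewrite !(proj2 LPc).
      assert (Pck1 : Pc k1 = vzero) by (unfold Pc; rewrite Pk1; apply subxx).
      assert (Pcw : Pc w = w) by (unfold Pc; rewrite Pw; apply sub0).
      rewrite Pck1, Pcw, scal_zero, sub0. fold x0. change (Pc (A w)) with (vsub (A w) (P (A w))). rewrite Hw. apply subxx. }
    assert (Mu : M u = P (M u)) by (apply sub_eq; exact HPc).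
    set (g := GG (M u)).
    assert (G0g : G0 g = M u) by (change (P (M u) = M u); symmetry; exact Mu).
    assert (Qig : vopp (Ginv (G0p (E k1))) = g).
    { unfold E. fold w. change (vsub (A k1) (vscal z k1)) with (M k1).
      change (Ginv (G0p ?y)) with (GG y). rewrite <- (lin_opp GG) by auto.
      assert (E3 : vopp (vsub (A w) (M k1)) = vsub (vsub (M k1) (M w)) (vscal z w)).
      { rewrite <- (subK (A w) (vscal z w)). change (vsub (A w) (vscal z w)) with (M w).
        unfold vsub. rewrite !opp_add, opp_opp. rewrite vadd_comm, <- vadd_assoc. reflexivity. }
      rewrite E3, <- (lin_sub M) by auto. fold u. rewrite (lin_sub GG), (proj2 LGG) by auto.
      unfold GG at 2. rewrite G0pw, (lin0 Ginv), scal_zero, sub0 by auto. reflexivity. }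
    rewrite Qig, (HQ z RA (conj BRA Hres)), G0g.
    rewrite (proj1 (Hres u) : RA (M u) = u). unfold u. rewrite lin_sub, G0pw, sub0 by auto. unfold k1. apply hG2.
  - intro h. apply opp_opp.
Qed.
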